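(* Let $(L,b)$ and $(M,b)$ be cochain complexes of vector spaces, and let $i:(L,b)\to(M,b)$, $p:(M,b)\to(L,b)$ be quasi-isomorphisms (cochain maps inducing isomorphisms in cohomology) with $ip=1$. Let $\delta:M\to M$ be a linear map of degree $+1$ with $(b+\delta)^2=0$. Then $(b+p\delta i)^2=0$ on $L$, and $i:(L,b+p\delta i)\to(M,b+\delta)$ and $p:(M,b+\delta)\to(L,b+p\delta i)$ are quasi-isomorphisms (cochain maps) satisfying $ip=1$.
   Context: All maps are linear. *)

(* Defs.v *)
From HB Require Import structures.
From mathcomp Require Import all_boot all_order all_algebra.
Set Implicit Arguments. Unset Strict Implicit. Unset Printing Implicit Defensive.
Import GRing.Theory.
Local Open Scope ring_scope.

(* A Z-graded vector space over K is a family  L : int -> lmodType K.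
   A degree +1 map is a family  d : forall n, L n -> L (n+1). *)

Section Complexes.
Variable K : fieldType.

Definition is_differential (L : int -> lmodType K)
    (d : forall n : int, L n -> L (n + 1)%R) : Prop :=
  forall (n : int) (x : L n), d (n + 1)%R (d n x) = 0.

Definition cochain_map (L M : int -> lmodType K)
    (dL : forall n : int, L n -> L (n + 1)%R)
    (dM : forall n : int, M n -> M (n + 1)%R)
    (f : forall n : int, L n -> M n) : Prop :=
  forall (n : int) (x : L n), f (n + 1)%R (dL n x) = dM n (f n x).

(* f induces an isomorphism H^k(L) -> H^k(M) in every degree k = m+1
   (m ranges over all of int, so k does too), where
   H^(m+1)(L) = ker dL_(m+1) / im dL_m. Written out without quotients:
   surjectivity and injectivity of the induced map on cohomology. *)
Definition quasi_iso (L M : int -> lmodType K)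
    (dL : forall n : int, L n -> L (n + 1)%R)
    (dM : forall n : int, M n -> M (n + 1)%R)
    (f : forall n : int, L n -> M n) : Prop :=
  forall m : int,
    (forall y : M (m + 1)%R, dM (m + 1)%R y = 0 ->
       exists x : L (m + 1)%R, dL (m + 1)%R x = 0 /\
         exists z : M m, f (m + 1)%R x - y = dM m z) /\
    (forall x : L (m + 1)%R, dL (m + 1)%R x = 0 ->
       (exists z : M m, f (m + 1)%R x = dM m z) ->
       exists w : L m, x = dL m w).

End Complexes.

(* Main.v *)
Require Import Defs.
From HB Require Import structures.
From mathcomp Require Import all_boot all_order all_algebra.
Import GRing.Theory.
Local Open Scope ring_scope.

Theorem mainTheorem4 (K : fieldType) (L M : int -> lmodType K)
  (bL : forall n : int, {linear L n -> L (n + 1)%R})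
  (bM : forall n : int, {linear M n -> M (n + 1)%R})
  (i : forall n : int, {linear L n -> M n})
  (p : forall n : int, {linear M n -> L n})
  (delta : forall n : int, {linear M n -> M (n + 1)%R}) :
  is_differential (fun n x => bL n x) ->
  is_differential (fun n x => bM n x) ->
  cochain_map (fun n x => bL n x) (fun n x => bM n x) (fun n x => i n x) ->
  cochain_map (fun n x => bM n x) (fun n x => bL n x) (fun n x => p n x) ->
  quasi_iso (fun n x => bL n x) (fun n x => bM n x) (fun n x => i n x) ->
  quasi_iso (fun n x => bM n x) (fun n x => bL n x) (fun n x => p n x) ->
  (forall (n : int) (x : M n), i n (p n x) = x) ->
  is_differential (fun n x => bM n x + delta n x) ->
  let DL := fun (n : int) (x : L n) => bL n x + p (n + 1)%R (delta n (i n x)) in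
  let DM := fun (n : int) (x : M n) => bM n x + delta n x in
  is_differential DL /\
  cochain_map DL DM (fun n x => i n x) /\
  cochain_map DM DL (fun n x => p n x) /\
  quasi_iso DL DM (fun n x => i n x) /\
  quasi_iso DM DL (fun n x => p n x) /\
  (forall (n : int) (x : M n), i n (p n x) = x).
Proof.
move=> HbL HbM Hi Hp Qi Qp Hip Hd DL DM.
rewrite /is_differential /cochain_map /quasi_iso /= in HbL HbM Hi Hp Qi Qp Hd.
have key : forall m (k : L (m+1)), i (m+1) k = 0 -> bL (m+1) k = 0 ->
    exists k' : L m, DL m k' = k.
  move=> m k ik bk.
  have [_ inj] := Qi m.
  have [|w' ew'] := inj k bk; first by exists 0; rewrite ik linear0.
  exists (w' - p m (i m w')).
  have iz : i m (w' - p m (i m w')) = 0 by rewrite linearB /= Hip subrr.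
  rewrite /DL iz !linear0 addr0 linearB /= -Hp -Hi -ew' ik linear0 subr0 //.
have DLp : forall n (y : M n), DL n (p n y) = p (n+1) (DM n y).
  move=> n y; rewrite /DL /DM Hip linearD /=.
  by rewrite (Hp n y).
have iDL : forall n (x : L n), i (n+1) (DL n x) = DM n (i n x).
  by move=> n x; rewrite /DL /DM linearD /= Hip Hi.
have DLi0 : forall n (k : L n), i n k = 0 -> DL n k = bL n k.
  by move=> n k ik; rewrite /DL ik !linear0 addr0.
split.
  move=> n x.
  have -> : DL (n+1) (DL n x) = bL (n+1) (DL n x) + p _ (delta _ (i _ (DL n x))) by [].
  rewrite iDL {1}/DL linearD /= HbL add0r.
  have H := Hd n (i n x); rewrite !linearD /= HbM add0r in H.
  rewrite -(Hp _ (delta n (i n x))) /DM !linearD /= addrA -!linearD /=.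
  rewrite (_ : _ + _ = 0) ?linear0 //.
  by rewrite -[RHS]H; apply: esym; apply: addrA.
have DLD : forall n (u v : L n), DL n (u + v) = DL n u + DL n v.
  by move=> n u v; rewrite /DL !linearD /= addrACA.
have DLN : forall n (u : L n), DL n (- u) = - DL n u.
  by move=> n u; rewrite /DL !linearN /= opprD.
have kdec : forall m (x : L (m+1)), DL (m+1) x = 0 ->
    exists k' : L m, DL m k' = x - p (m+1) (i (m+1) x).
  move=> m x dx.
  apply: key.
    by rewrite linearB /= Hip subrr.
  rewrite -DLi0; last by rewrite linearB /= Hip subrr.
  by rewrite DLD DLN DLp -iDL dx !linear0 addr0.
split; first by [].
split; first by move=> n x; rewrite DLp.
split.
  move=> m; split.
    move=> y dy; exists (p (m+1) y); split; first by rewrite DLp dy linear0.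
    by exists 0; rewrite Hip subrr /DM !linear0 addr0.
  move=> x dx [z ez].
  have [k' ek'] := kdec m x dx.
  exists (k' + p m z).
  by rewrite DLD ek' DLp -ez addrNK.
split; last by [].
move=> m; split.
  move=> y dy; exists (i (m+1) y); split; first by rewrite -iDL dy linear0.
  have [k' ek'] := kdec m y dy.
  by exists (- k'); rewrite DLN ek' opprB.
move=> x dx [z ez].
by exists (i m z); rewrite -iDL -ez Hip.
Qed.
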